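(* Let $C$ be a differentiable convex curve in $\mathbb{R}^2$, and let $\alpha\colon I\to C$ be a differentiable curve moving in the counterclockwise direction about $C$. Let $L(t)=\{\alpha(t)+s\,n(\alpha(t)) : s\in\mathbb{R}\}$ be the line through $\alpha(t)$ and $x_\alpha(t)$. Suppose $\beta(t)=\alpha(t)+s(t)\,n(\alpha(t))$ is any differentiable curve (not necessarily in $C$) with $\beta(t)\in L(t)\setminus\{x_\alpha(t)\}$ for all $t\in I$. Then $(\beta'(t),n(\alpha(t)))$ is a positive basis of $\mathbb{R}^2$ if and only if $\beta(t)$ lies in the same connected component of $L(t)\setminus\{x_\alpha(t)\}$ as $\alpha(t)$.
   Context: $I=[0,1]$. For a differentiable curve $\alpha$: unit tangent $T=\alpha'/\|\alpha'\|$, inner unit normal $n(\alpha(t))=T'/\|T'\|$, curvature $\kappa(t)=\|T'(t)\|/\|\alpha'(t)\|$, center of curvature $x_\alpha(t)=\alpha(t)+\frac{1}{\kappa(t)}n(\alpha(t))$. A basis $(v,w)$ of $\mathbb{R}^2$ is positive if $\det(v,w)>0$. *)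

(* Defs.v *)
From HB Require Import structures.
From mathcomp Require Import all_boot all_order all_algebra.
From mathcomp Require Import all_classical all_reals all_analysis.
Set Implicit Arguments. Unset Strict Implicit. Unset Printing Implicit Defensive.
Import Order.TTheory GRing.Theory Num.Theory.
Import numFieldNormedType.Exports.
Local Open Scope classical_set_scope.
Local Open Scope ring_scope.

Section Defs.
Variable R : realType.
Local Notation V := (R * R)%type.

Definition det2 (v w : V) : R := v.1 * w.2 - v.2 * w.1.
Definition dot2 (v w : V) : R := v.1 * w.1 + v.2 * w.2.
Definition enorm (v : V) : R := Num.sqrt (dot2 v v).

Definition tangent (a : R -> V) (t : R) : V :=
  (enorm (derive1 a t))^-1 *: derive1 a t.
Definition normal (a : R -> V) (t : R) : V :=
  (enorm (derive1 (tangent a) t))^-1 *: derive1 (tangent a) t.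
Definition curvature (a : R -> V) (t : R) : R :=
  enorm (derive1 (tangent a) t) / enorm (derive1 a t).
Definition curv_center (a : R -> V) (t : R) : V :=
  a t + (curvature a t)^-1 *: normal a t.
Definition normal_line (a : R -> V) (t : R) : set V :=
  [set a t + s *: normal a t | s in [set: R]].

Definition convex2 (K : set V) : Prop :=
  forall x y l, K x -> K y -> 0 <= l <= 1 -> K (l *: x + (1 - l) *: y).

(** v is an outward normal of a supporting line of K at x *)
Definition supporting (K : set V) (x v : V) : Prop :=
  v != 0 /\ forall y, K y -> dot2 v (y - x) <= 0.

(** C is a differentiable convex curve: the boundary of a compact convex set
    with nonempty interior, having a unique supporting line at each point. *)
Definition diff_convex_curve (C : set V) : Prop :=
  exists K : set V,
    [/\ convex2 K, compact K, (exists x, interior K x),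
        C = closure K `\` interior K &
        forall x, C x -> forall v w, supporting K x v -> supporting K x w ->
          exists c : R, 0 < c /\ w = c *: v].

(** alpha moves counterclockwise about C on I: at every time the curve C lies
    to the left of the velocity alpha'(t). *)
Definition counterclockwise (C : set V) (a : R -> V) : Prop :=
  forall t, t \in `[0, 1] -> forall y, C y -> 0 <= det2 (derive1 a t) (y - a t).

End Defs.

(* Main.v *)
Require Import Defs.
From HB Require Import structures.
From mathcomp Require Import all_boot all_order all_algebra.
From mathcomp Require Import all_classical all_reals all_analysis.
From mathcomp Require Import ring lra.
Import Order.TTheory GRing.Theory Num.Theory.
Import numFieldNormedType.Exports.
Local Open Scope classical_set_scope.
Local Open Scope ring_scope.


Section S.
Variable R : realType.
Local Notation V := (R * R)%type.

Lemma dq_cvg (f : R -> V) x : derivable f x 1 ->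
  (fun h => h^-1 *: (f (h + x) - f x)) @ 0^' --> derive1 f x.
Proof.
rewrite /derivable /derive1.
have -> : (fun h : R => h^-1 *: (f (h *: 1 + x) - f x)) = (fun h => h^-1 *: (f (h + x) - f x)).
  by apply/funext => h; rewrite /GRing.scale /= mulr1.
by [].
Qed.

Lemma dq_cvgR (f : R -> R) x : derivable f x 1 ->
  (fun h => h^-1 *: (f (h + x) - f x)) @ 0^' --> derive1 f x.
Proof.
rewrite /derivable /derive1.
have -> : (fun h : R => h^-1 *: (f (h *: 1 + x) - f x)) = (fun h => h^-1 *: (f (h + x) - f x)).
  by apply/funext => h; rewrite /GRing.scale /= mulr1.
by [].
Qed.

Lemma is_derive_of_cvg (f : R -> R) x l :
  (fun h => h^-1 * (f (h + x) - f x)) @ 0^' --> l -> is_derive x 1 f l.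
Proof.
move=> H.
have E : (fun h : R => h^-1 *: (f (h *: 1 + x) - f x)) = (fun h => h^-1 * (f (h + x) - f x)).
  by apply/funext => h; rewrite /GRing.scale /= mulr1.
have D : derivable f x 1 by rewrite /derivable E; apply/cvg_ex; exists l.
apply: DeriveDef => //.
rewrite /derive E; exact: cvg_lim.
Qed.

Lemma cont_of_deriv (f : R -> V) x : derivable f x 1 ->
  (fun h => f (h + x)) @ 0^' --> f x.
Proof.
move=> /dq_cvg H.
have E : \forall h \near 0^', f x + h *: (h^-1 *: (f (h + x) - f x)) = f (h + x).
  near=> h.
  have hn : h != 0 by near: h; exact: nbhs_dnbhs_neq.
  by rewrite scalerA mulfV // scale1r addrC subrK.
apply: cvg_trans; first exact: (near_eq_cvg E).
suff H2 : (fun h => f x + h *: (h^-1 *: (f (h + x) - f x))) @ 0^' --> f x + 0.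
  by rewrite addr0 in H2.
apply: cvgD; first exact: cvg_cst.
rewrite -(scale0r (derive1 f x)).
apply: cvgZ => //.
exact: cvg_within.
Unshelve. all: by end_near.
Qed.

Definition J (v : V) : V := (- v.2, v.1).

Lemma cvg_fst_ {F : set_system R} {FF : Filter F} {g : R -> V} {l : V} :
  g @ F --> l -> (fun h => (g h).1) @ F --> l.1.
Proof. by move=> H; apply: (cvg_comp _ _ H); exact: cvg_fst. Qed.

Lemma cvg_snd_ {F : set_system R} {FF : Filter F} {g : R -> V} {l : V} :
  g @ F --> l -> (fun h => (g h).2) @ F --> l.2.
Proof. by move=> H; apply: (cvg_comp _ _ H); exact: cvg_snd. Qed.

Lemma pair_neq0 (v : V) : v != 0 -> 0 < v.1 ^+ 2 + v.2 ^+ 2.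
Proof.
case: v => a b /= H.
have : (a != 0) || (b != 0).
  apply: contraNT H; rewrite negb_or !negbK => /andP[/eqP -> /eqP ->]; by [].
case/orP => H1.
  by apply: ltr_pwDl; [rewrite lt_def sqr_ge0 andbT expf_neq0 | exact: sqr_ge0].
by apply: ltr_wpDl; [exact: sqr_ge0 | rewrite lt_def sqr_ge0 andbT expf_neq0].
Qed.

Lemma dot2E (v w : V) : dot2 v w = v.1 * w.1 + v.2 * w.2.
Proof. by []. Qed.
Lemma det2E (v w : V) : det2 v w = v.1 * w.2 - v.2 * w.1.
Proof. by []. Qed.

Lemma enorm_pos (v : V) : v != 0 -> 0 < enorm v.
Proof.
move=> /pair_neq0 H; rewrite /enorm sqrtr_gt0 dot2E.
by rewrite -!expr2.
Qed.

Lemma enorm_sq (v : V) : enorm v ^+ 2 = v.1 ^+ 2 + v.2 ^+ 2.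
Proof.
rewrite /enorm sqr_sqrtr dot2E ?expr2 //.
by apply: addr_ge0; rewrite -expr2 sqr_ge0.
Qed.

Lemma unit_tangent (a : R -> V) u : derive1 a u != 0 ->
  dot2 (tangent a u) (tangent a u) = 1.
Proof.
move=> H; have P := enorm_pos _ H; have E := enorm_sq (derive1 a u).
rewrite /tangent dot2E /=.
set n := enorm _ in P E *; set v := derive1 a u in E *.
have nz : n != 0 by rewrite gt_eqF.
rewrite /GRing.scale /=.
apply: (@mulfI _ (n ^+ 2)); first by rewrite expf_neq0.
rewrite mulr1 E.
have -> : n^-1 * v.1 * (n^-1 * v.1) + n^-1 * v.2 * (n^-1 * v.2) = (v.1 ^+ 2 + v.2 ^+ 2) / n ^+ 2.
  by rewrite -exprVn; ring.
by rewrite -E mulfV ?mulr1 // expf_neq0.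
Qed.


Lemma perp (Tf : R -> V) t (G : set_system R) {FG : ProperFilter G}
  (HG : forall (T : topologicalType) (f : R -> T) (l : T), f @ (0:R)^' --> l -> f @ G --> l)
  (Hin : \forall h \near G, dot2 (Tf (h + t)) (Tf (h + t)) = 1)
  (Ht : dot2 (Tf t) (Tf t) = 1) (Hd : derivable Tf t 1) :
  dot2 (Tf t) (derive1 Tf t) = 0.
Proof.
have Q := HG _ _ _ (dq_cvg _ _ Hd); have C := HG _ _ _ (cont_of_deriv _ _ Hd).
set q := (fun h => _) in Q.
set T' := derive1 Tf t in Q *.
have L : (fun h => (q h).1 * ((Tf (h+t)).1 + (Tf t).1) + (q h).2 * ((Tf (h+t)).2 + (Tf t).2)) @ G
   --> (T'.1 * ((Tf t).1 + (Tf t).1) + T'.2 * ((Tf t).2 + (Tf t).2)).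
  apply: cvgD; apply: cvgM.
  - exact: cvg_fst_ Q.
  - by apply: cvgD; [exact: (cvg_fst_ C) | exact: cvg_cst].
  - exact: cvg_snd_ Q.
  - by apply: cvgD; [exact: (cvg_snd_ C) | exact: cvg_cst].
have L0 : (fun h => (q h).1 * ((Tf (h+t)).1 + (Tf t).1) + (q h).2 * ((Tf (h+t)).2 + (Tf t).2)) @ G
   --> (0 : R).
  apply: cvg_near_cst; near=> h.
  have E : dot2 (Tf (h + t)) (Tf (h + t)) = 1 by near: h.
  move: E Ht; rewrite /q !dot2E /= => E1 E2.
  transitivity (h^-1 * (((Tf (h + t)).1 * (Tf (h + t)).1 + (Tf (h + t)).2 * (Tf (h + t)).2)
     - ((Tf t).1 * (Tf t).1 + (Tf t).2 * (Tf t).2))); first by rewrite /GRing.scale /=; ring.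
  by rewrite E1 E2 subrr mulr0.
have := cvg_unique _ L L0.
rewrite dot2E => E.
apply: (@mulfI _ 2); first by rewrite pnatr_eq0.
rewrite /= mulr0 -E.
have key : forall a b c d : R, 2 * (a*c+b*d) = c*(a+a)+d*(b+b) by move=> *; ring.
exact: key.
Unshelve. all: by end_near.
Qed.


Lemma scale_pair (k x y : R) : k *: ((x, y) : V) = (k * x, k * y).
Proof. by []. Qed.

Lemma decomp (T T' : V) : dot2 T T = 1 -> dot2 T T' = 0 -> T' = det2 T T' *: J T.
Proof.
case: T T' => a b [c d] H1 H2; rewrite !dot2E /= in H1 H2; rewrite det2E /J scale_pair /=.
congr pair; apply/eqP; rewrite -subr_eq0; apply/eqP.
  transitivity (c * (1 - (a * a + b * b)) + a * (a * c + b * d)); first by ring.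
  by rewrite H1 H2 subrr; ring.
transitivity (d * (1 - (a * a + b * b)) + b * (a * c + b * d)); first by ring.
by rewrite H1 H2 subrr; ring.
Qed.

Lemma dotJJ (v : V) : dot2 (J v) (J v) = dot2 v v.
Proof. case: v => a b; rewrite !dot2E /J /=; ring. Qed.

Lemma dotJ (v : V) : dot2 (J v) v = 0.
Proof. case: v => a b; rewrite !dot2E /J /=; ring. Qed.

Lemma detJ (v w : V) : det2 v (J w) = dot2 v w.
Proof. case: v => a b; case: w => c d; rewrite det2E dot2E /J /=; ring. Qed.

Lemma enorm_scale_unit (l : R) (v : V) : dot2 v v = 1 -> enorm (l *: v) = `|l|.
Proof.
case: v => a b; rewrite /enorm scale_pair !dot2E /= => H.
have -> : l * a * (l * a) + l * b * (l * b) = l ^+ 2 * (a * a + b * b) by ring.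
by rewrite H mulr1 sqrtr_sqr.
Qed.


Lemma G_exists t : t \in `[0, 1] -> exists G : set_system R,
  [/\ ProperFilter G,
   (forall (T : topologicalType) (f : R -> T) (l : T), f @ (0:R)^' --> l -> f @ G --> l) &
   (\forall h \near G, h + t \in `[0, 1])].
Proof.
rewrite in_itv /= => /andP[t0 t1].
case: (ltP t 1) => ht.
  exists (at_right 0); split.
  - exact: at_right_proper_filter.
  - by move=> T f l; exact: cvg_dnbhs_at_right.
  near=> h.
  have h0 : 0 < h by near: h; exact: nbhs_right_gt.
  have h1 : h < 1 - t by near: h; apply: nbhs_right_lt; rewrite subr_gt0.
  rewrite in_itv /=; apply/andP; split; lra.
exists (at_left 0); split.
- exact: at_left_proper_filter.
- by move=> T f l; exact: cvg_dnbhs_at_left.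
near=> h.
have h0 : h < 0 by near: h; exact: nbhs_left_lt.
have h1 : -1 < h by near: h; apply: nbhs_left_gt; lra.
rewrite in_itv /=; apply/andP; split; lra.
Unshelve. all: by end_near.
Qed.


Lemma aux1 {t b e c : R} : 0 < e -> b <= e/2 -> t < c -> c < t + b -> `|c - t| < e.
Proof. move=> *; rewrite gtr0_norm; lra. Qed.
Lemma aux2 {t b e c : R} : 0 < e -> b <= e/2 -> t - b < c -> c < t -> `|c - t| < e.
Proof. move=> *; rewrite ltr0_norm; lra. Qed.


Lemma psi_cont (p n : V) : continuous (fun x : V => dot2 (x - p) n).
Proof.
move=> x; rewrite /dot2 /=.
apply: cvgD; apply: cvgM; try exact: cvg_cst.
- by apply: cvgB; [exact: cvg_fst | exact: cvg_cst].
- by apply: cvgB; [exact: cvg_snd | exact: cvg_cst].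
Qed.

Lemma line_cont (p n : V) : continuous (fun u : R => p + u *: n).
Proof.
move=> x; apply: cvgD; first exact: cvg_cst.
by apply: cvgZ; [exact: cvg_id | exact: cvg_cst].
Qed.

Lemma psi_line (p n : V) (u : R) : dot2 n n = 1 -> dot2 (p + u *: n - p) n = u.
Proof.
move=> H; rewrite addrC addKr; move: H; case: n => a b.
rewrite scale_pair /dot2 /= => H.
transitivity (u * (a * a + b * b)); first by ring.
by rewrite H mulr1.
Qed.

Lemma comp_line (p n : V) (r s : R) : dot2 n n = 1 -> 0 < r -> s != r ->
  (connected_component ([set p + u *: n | u in [set: R]] `\ (p + r *: n)) p (p + s *: n)
   <-> s < r).
Proof.
move=> nn r0 sr; split.
  case=> C0 [Cp Csub Cc] Cs.
  rewrite ltNge le_eqVlt negb_or eq_sym sr /=; apply/negP => rs.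
  have Ci : is_interval ((fun x => dot2 (x - p) n) @` C0).
    apply/connected_intervalP; apply: connected_continuous_connected => //.
    exact: continuous_subspaceT (psi_cont p n).
  have [x C0x xr] : ((fun x => dot2 (x - p) n) @` C0) r.
    apply: (Ci 0 s).
    - by exists p => //; rewrite subrr /dot2 /= !mul0r addr0.
    - by exists (p + s *: n) => //; rewrite psi_line.
    - by rewrite (ltW r0) (ltW rs).
  have [[u _ xu] xc] := Csub x C0x.
  apply: xc; rewrite /= -xu.
  by move: xr; rewrite -xu psi_line // => ->.
move=> sr'.
exists ((fun u => p + u *: n) @` [set u | u < r]); last by exists s.
split.
- by exists 0 => //; rewrite scale0r addr0.
- move=> x [u ur <-]; split; first by exists u.
  move=> /= E.
  have := psi_line p n u nn; rewrite E psi_line // => ru.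
  by move: ur; rewrite -ru /= ltxx.
- apply: connected_continuous_connected.
    apply/connected_intervalP => x y xr yr z /andP[_ zy] /=.
    exact: le_lt_trans zy yr.
  exact: continuous_subspaceT (line_cont p n).
Qed.


Lemma alg_id (h s1 s0 : R) (A A0 W W0 : V) :
  dot2 (h^-1 *: ((A + s1 *: J W) - (A0 + s0 *: J W0))) W0
  = dot2 (h^-1 *: (A - A0)) W0 + s1 * dot2 (J (h^-1 *: (W - W0))) W0.
Proof.
case: A => a1 a2; case: A0 => b1 b2; case: W => w1 w2; case: W0 => v1 v2.
rewrite /J /= !scale_pair /dot2 /= /GRing.scale /=; ring.
Qed.

Lemma dotJdecomp (T : V) (l : R) : dot2 T T = 1 -> dot2 (J (l *: J T)) T = - l.
Proof.
case: T => x y; rewrite /J scale_pair /dot2 /= => U.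
transitivity (- (l * (x * x + y * y))); first by ring.
by rewrite U mulr1.
Qed.

Lemma dot2_scale (m : R) (v w : V) : dot2 (m *: v) w = m * dot2 v w.
Proof. case: v => a b; rewrite scale_pair /dot2 /=; ring. Qed.

Section Alpha.
Variables (C : set V) (alpha : R -> V).
Hypothesis HC : forall t, t \in `[0, 1] -> C (alpha t).
Hypothesis Hd : forall t, t \in `[0, 1] -> derivable alpha t 1.
Hypothesis Hn0 : forall t, t \in `[0, 1] -> derive1 alpha t != 0.
Hypothesis HdT : forall t, t \in `[0, 1] -> derivable (tangent alpha) t 1.
Hypothesis HT0 : forall t, t \in `[0, 1] -> derive1 (tangent alpha) t != 0.
Hypothesis Hccw : counterclockwise C alpha.

Lemma perp_at {t : R} : t \in `[0, 1] -> dot2 (tangent alpha t) (derive1 (tangent alpha) t) = 0.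
Proof.
move=> tI; have [G [FG HG Hin]] := G_exists _ tI.
apply: (@perp _ t G FG HG) => //.
- by apply: filterS Hin => h hI; apply: unit_tangent; apply: Hn0.
- by apply: unit_tangent; apply: Hn0.
- exact: HdT.
Qed.

Lemma decomp_at {t : R} : t \in `[0, 1] ->
  derive1 (tangent alpha) t = det2 (tangent alpha t) (derive1 (tangent alpha) t) *: J (tangent alpha t).
Proof.
move=> tI; apply: decomp; last exact: perp_at.
by apply: unit_tangent; apply: Hn0.
Qed.

Lemma lam_nz {t : R} : t \in `[0, 1] -> det2 (tangent alpha t) (derive1 (tangent alpha) t) != 0.
Proof.
move=> tI; apply/negP => /eqP E; move/negP: (HT0 _ tI); apply.
by rewrite (decomp_at tI) E scale0r.
Qed.


Lemma dg_T {x : R} : x \in `[0, 1] -> derive1 alpha x = enorm (derive1 alpha x) *: tangent alpha x.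
Proof.
move=> xI; rewrite /tangent scalerA mulfV ?scale1r //.
by rewrite gt_eqF // (enorm_pos _ (Hn0 _ xI)).
Qed.

Lemma g_derive (a : V) (t : R) {x : R} : x \in `[0, 1] ->
  is_derive x 1 (fun u => det2 a (alpha u - alpha t)) (det2 a (derive1 alpha x)).
Proof.
move=> xI; apply: is_derive_of_cvg.
have Q := dq_cvg _ _ (Hd _ xI).
set q := (fun h => _) in Q.
have -> : (fun h => h^-1 * (det2 a (alpha (h + x) - alpha t) - det2 a (alpha x - alpha t)))
   = (fun h => a.1 * (q h).2 - a.2 * (q h).1).
  apply/funext => h; rewrite /q !det2E /= /GRing.scale /=; ring.
rewrite det2E; apply: cvgB; apply: cvgM; try exact: cvg_cst.
- exact: cvg_snd_ Q.
- exact: cvg_fst_ Q.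
Qed.

Lemma g_cont (a : V) (t : R) {x : R} : x \in `[0, 1] ->
  {for x, continuous (fun u => det2 a (alpha u - alpha t))}.
Proof.
move=> xI; case: (g_derive a t xI) => D _.
by apply: differentiable_continuous; apply/derivable1_diffP.
Qed.

Lemma lam_pos {t : R} : t \in `[0, 1] -> 0 < det2 (tangent alpha t) (derive1 (tangent alpha) t).
Proof.
move=> tI; have tI0 := tI.
set lam := det2 _ _.
have nz : lam != 0 := lam_nz tI.
rewrite lt_neqAle eq_sym nz /= leNgt; apply/negP => Hlt.
set a := derive1 alpha t.
have na0 : 0 < enorm a := enorm_pos _ (Hn0 _ tI).
have aT : a = enorm a *: tangent alpha t by exact: dg_T.
have QT := dq_cvg _ _ (HdT _ tI).
set q := (fun h => _) in QT.
have Lm : (fun h => a.1 * (q h).2 - a.2 * (q h).1) @ (0:R)^' --> det2 a (derive1 (tangent alpha) t).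
  rewrite det2E; apply: cvgB; apply: cvgM; try exact: cvg_cst.
  - exact: cvg_snd_ QT.
  - exact: cvg_fst_ QT.
have lneg : det2 a (derive1 (tangent alpha) t) < 0.
  rewrite {1}aT.
  have -> : det2 (enorm a *: tangent alpha t) (derive1 (tangent alpha) t) = enorm a * lam.
    rewrite /lam !det2E; case: (tangent alpha t) => u v; rewrite scale_pair /=; ring.
  by rewrite pmulr_rlt0.
have Hm := cvgr_lt _ Lm 0 lneg.
have aTt : det2 a (tangent alpha t) = 0.
  rewrite {1}aT det2E; case: (tangent alpha t) => u v; rewrite scale_pair /=; ring.
have Hm' : \forall h \near (0:R)^', h^-1 * det2 a (tangent alpha (h + t)) < 0.
  near=> h.
  have : a.1 * (q h).2 - a.2 * (q h).1 < 0 by near: h; exact: Hm.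
  suff -> : h^-1 * det2 a (tangent alpha (h + t)) = a.1 * (q h).2 - a.2 * (q h).1 by [].
  rewrite /q; move: aTt; rewrite /det2.
  move: (tangent alpha (h + t)) (tangent alpha t) => [x1 x2] [y1 y2] /= E.
  rewrite /GRing.scale /=.
  transitivity (h^-1 * (a.1 * x2 - a.2 * x1) - h^-1 * (a.1 * y2 - a.2 * y1)); last by ring.
  by rewrite E mulr0 subr0.
move: Hm'; rewrite near_withinE => /nbhs_norm0P [e /= e0 He].
set g := (fun u => det2 a (alpha u - alpha t)).
have gt0 : det2 a (alpha t - alpha t) = 0 by rewrite subrr /det2 /= !mulr0 subrr.
have dgE : forall x, x \in `[0, 1] -> det2 a (derive1 alpha x) = enorm (derive1 alpha x) * det2 a (tangent alpha x).
  move=> x xI; rewrite {1}(dg_T xI) !det2E; case: (tangent alpha x) => u v; rewrite scale_pair /=; ring.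
move: tI; rewrite in_itv /= => /andP[t0 t1].
case: (ltP t 1) => ht.
  set b := Order.min (e / 2) (1 - t).
  have [b1 b2] : b <= e / 2 /\ b <= 1 - t by move: (lexx b); rewrite {2}/b le_min => /andP[].
  have b0 : 0 < b by rewrite /b lt_min; apply/andP; split; lra.
  have ltb : t < t + b by lra.
  have sub : forall x, x \in `[t, t + b] -> x \in `[0, 1].
    by move=> x; rewrite !in_itv /= => /andP[x1 x2]; apply/andP; split; lra.
  have gc : {within `[t, t + b], continuous g}.
    apply: continuous_in_subspaceT => x xI; apply: g_cont; apply: sub.
    by move: xI; rewrite inE.
  have [c cI E] := MVT ltb (fun x xI => g_derive a t (sub x (subset_itv_oo_cc xI))) gc.
  have cI' := cI; move: cI'; rewrite in_itv /= => /andP[c1 c2].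
  have Pc : (c - t)^-1 * det2 a (tangent alpha (c - t + t)) < 0.
    apply: He => /=; last by rewrite subr_eq0 gt_eqF.
    exact: (aux1 e0 b1 c1 c2).
  rewrite subrK pmulr_rlt0 in Pc; last by rewrite invr_gt0 subr_gt0.
  have cI01 : c \in `[0, 1] by apply: sub; rewrite in_itv /= !ltW.
  have dgc : det2 a (derive1 alpha c) < 0.
    rewrite (dgE _ cI01).
    have en := enorm_pos _ (Hn0 _ cI01).
    by rewrite pmulr_rlt0.
  have tbI : t + b \in `[t, t + b] by rewrite in_itv /= lexx andbT; exact: ltW.
  have gb : 0 <= g (t + b) := Hccw _ tI0 _ (HC _ (sub _ tbI)).
  rewrite gt0 subr0 in E.
  have H : det2 a (derive1 alpha c) * (t + b - t) < 0 by rewrite pmulr_llt0 // addrC addKr.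
  rewrite -E in H.
  by have := lt_le_trans H gb; rewrite ltxx.
have t1' : t = 1 by apply/eqP; rewrite eq_le t1 ht.
set b := Order.min (e / 2) t.
have [b1 b2] : b <= e / 2 /\ b <= t by move: (lexx b); rewrite {2}/b le_min => /andP[].
have b0 : 0 < b by rewrite /b lt_min t1' ltr01 andbT divr_gt0.
have ltb : t - b < t by rewrite gtrBl.
have sub : forall x, x \in `[t - b, t] -> x \in `[0, 1].
  by move=> x; rewrite !in_itv /= => /andP[x1 x2]; apply/andP; split; lra.
have gc : {within `[t - b, t], continuous g}.
  apply: continuous_in_subspaceT => x xI; apply: g_cont; apply: sub.
  by move: xI; rewrite inE.
have [c cI E] := MVT ltb (fun x xI => g_derive a t (sub x (subset_itv_oo_cc xI))) gc.
have cI' := cI; move: cI'; rewrite in_itv /= => /andP[c1 c2].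
have Pc : (c - t)^-1 * det2 a (tangent alpha (c - t + t)) < 0.
  apply: He => /=; last by rewrite subr_eq0 lt_eqF.
  exact: (aux2 e0 b1 c1 c2).
rewrite subrK nmulr_rlt0 in Pc; last by rewrite invr_lt0 subr_lt0.
have cI01 : c \in `[0, 1] by apply: sub; rewrite in_itv /= !ltW.
have dgc : 0 < det2 a (derive1 alpha c).
  rewrite (dgE _ cI01).
  have en := enorm_pos _ (Hn0 _ cI01).
  by rewrite mulr_gt0.
have tbI : t - b \in `[t - b, t] by rewrite in_itv /= lexx /=; exact: ltW.
have gb : 0 <= g (t - b) := Hccw _ tI0 _ (HC _ (sub _ tbI)).
rewrite gt0 sub0r in E.
have H : 0 < det2 a (derive1 alpha c) * (t - (t - b)).
  by rewrite mulr_gt0 // opprB addrCA subrr addr0.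
rewrite -E oppr_gt0 in H.
by have := lt_le_trans H gb; rewrite ltxx.
Unshelve. all: by end_near.
Qed.

Lemma normal_at {t : R} : t \in `[0, 1] -> normal alpha t = J (tangent alpha t).
Proof.
move=> tI; rewrite /normal (decomp_at tI) enorm_scale_unit; last first.
  by rewrite dotJJ unit_tangent // (Hn0 _ tI).
rewrite gtr0_norm ?(lam_pos tI) // scalerA mulVf ?scale1r //.
exact: lam_nz tI.
Qed.

Lemma curv_at {t : R} : t \in `[0, 1] ->
  curvature alpha t = det2 (tangent alpha t) (derive1 (tangent alpha) t) / enorm (derive1 alpha t).
Proof.
move=> tI; rewrite /curvature {1}(decomp_at tI) enorm_scale_unit; last first.
  by rewrite dotJJ unit_tangent // (Hn0 _ tI).
by rewrite gtr0_norm ?(lam_pos tI).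
Qed.

Lemma normal_gen {u : R} : u \in `[0, 1] -> exists k, normal alpha u = k *: J (tangent alpha u).
Proof.
move=> uI; exists ((enorm (derive1 (tangent alpha) u))^-1 * det2 (tangent alpha u) (derive1 (tangent alpha) u)).
by rewrite /normal {2}(decomp_at uI) scalerA.
Qed.

Section Beta.
Variables (beta : R -> V) (s : R -> R).
Hypothesis Hb : forall t, t \in `[0, 1] -> beta t = alpha t + s t *: normal alpha t.
Hypothesis Hbd : forall t, t \in `[0, 1] -> derivable beta t 1.

Lemma beta_J {u : R} : u \in `[0, 1] ->
  beta u = alpha u + dot2 (beta u - alpha u) (J (tangent alpha u)) *: J (tangent alpha u).
Proof.
move=> uI; have [k E] := normal_gen uI.
rewrite (Hb _ uI) E scalerA [_ + _ - _]addrAC subrr add0r dot2_scale dotJJ.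
by rewrite unit_tangent ?mulr1 // (Hn0 _ uI).
Qed.


Lemma det_formula {t : R} : t \in `[0, 1] ->
  det2 (derive1 beta t) (normal alpha t)
  = enorm (derive1 alpha t) - s t * det2 (tangent alpha t) (derive1 (tangent alpha) t).
Proof.
move=> tI; rewrite (normal_at tI) detJ.
have [G [FG HG Hin]] := G_exists _ tI.
set T0 := tangent alpha t.
set T'0 := derive1 (tangent alpha) t.
set a' := derive1 alpha t.
have Qb := HG _ _ _ (dq_cvg _ _ (Hbd _ tI)).
have Qa := HG _ _ _ (dq_cvg _ _ (Hd _ tI)).
have QT := HG _ _ _ (dq_cvg _ _ (HdT _ tI)).
have Ca := HG _ _ _ (cont_of_deriv _ _ (Hd _ tI)).
have Cb := HG _ _ _ (cont_of_deriv _ _ (Hbd _ tI)).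
have CT := HG _ _ _ (cont_of_deriv _ _ (HdT _ tI)).
have S : (fun h => dot2 (beta (h + t) - alpha (h + t)) (J (tangent alpha (h + t)))) @ G
    --> dot2 (beta t - alpha t) (J T0).
  rewrite /dot2 /J /=.
  apply: cvgD; apply: cvgM.
  - by apply: cvgB; [exact: cvg_fst_ Cb | exact: cvg_fst_ Ca].
  - by apply: cvgN; exact: cvg_snd_ CT.
  - by apply: cvgB; [exact: cvg_snd_ Cb | exact: cvg_snd_ Ca].
  - exact: cvg_fst_ CT.
have L1 : (fun h => dot2 (h^-1 *: (beta (h + t) - beta t)) T0) @ G --> dot2 (derive1 beta t) T0.
  rewrite /dot2.
  apply: cvgD; apply: cvgM; try exact: cvg_cst.
  - exact: cvg_fst_ Qb.
  - exact: cvg_snd_ Qb.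
have L2 : (fun h => dot2 (h^-1 *: (alpha (h + t) - alpha t)) T0
     + dot2 (beta (h + t) - alpha (h + t)) (J (tangent alpha (h + t)))
       * dot2 (J (h^-1 *: (tangent alpha (h + t) - tangent alpha t))) T0) @ G
   --> dot2 a' T0 + dot2 (beta t - alpha t) (J T0) * dot2 (J T'0) T0.
  apply: cvgD; last apply: cvgM.
  - rewrite /dot2; apply: cvgD; apply: cvgM; try exact: cvg_cst.
    + exact: cvg_fst_ Qa.
    + exact: cvg_snd_ Qa.
  - exact: S.
  - rewrite /dot2 /J /=; apply: cvgD; apply: cvgM; try exact: cvg_cst.
    + by apply: cvgN; exact: cvg_snd_ QT.
    + exact: cvg_fst_ QT.
have L3 : (fun h => dot2 (h^-1 *: (beta (h + t) - beta t)) T0) @ G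
   --> dot2 a' T0 + dot2 (beta t - alpha t) (J T0) * dot2 (J T'0) T0.
  apply: cvg_trans L2; apply: near_eq_cvg; near=> h.
  have hI : h + t \in `[0, 1] by near: h.
  by apply: esym; rewrite {1}(beta_J hI) {1}(beta_J tI) alg_id.
have E := cvg_unique (@Rhausdorff R) L1 L3.
rewrite E.
have E1 : dot2 a' T0 = enorm a'.
  rewrite /a' {1}(dg_T tI) dot2_scale unit_tangent ?mulr1 //; exact: Hn0.
have E2 : dot2 (beta t - alpha t) (J T0) = s t.
  rewrite (Hb _ tI) (normal_at tI) [_ + _ - _]addrAC subrr add0r dot2_scale dotJJ.
  by rewrite unit_tangent ?mulr1 // (Hn0 _ tI).
have E3 : dot2 (J T'0) T0 = - det2 T0 T'0.
  have U := unit_tangent _ _ (Hn0 _ tI); rewrite -/T0 in U.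
  rewrite {1}/T'0 (decomp_at tI).
  exact: dotJdecomp U.
by rewrite E1 E2 E3 mulrN.
Unshelve. all: by end_near.
Qed.

Lemma final_sec {t : R} : t \in `[0, 1] -> beta t != curv_center alpha t ->
  (0 < det2 (derive1 beta t) (normal alpha t) <->
   connected_component (normal_line alpha t `\ curv_center alpha t) (alpha t) (beta t)).
Proof.
move=> tI Hne.
rewrite (det_formula tI).
set lam := det2 _ _.
set na := enorm _.
have l0 : 0 < lam := lam_pos tI.
have na0 : 0 < na := enorm_pos _ (Hn0 _ tI).
have cE : curv_center alpha t = alpha t + (na / lam) *: J (tangent alpha t).
  by rewrite /curv_center (normal_at tI) (curv_at tI) invf_div.
have bE : beta t = alpha t + s t *: J (tangent alpha t) by rewrite (Hb _ tI) (normal_at tI).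
have LE : normal_line alpha t = [set alpha t + u *: J (tangent alpha t) | u in [set: R]].
  by rewrite /normal_line (normal_at tI).
have nn : dot2 (J (tangent alpha t)) (J (tangent alpha t)) = 1.
  by rewrite dotJJ unit_tangent // (Hn0 _ tI).
have r0 : 0 < na / lam by rewrite divr_gt0.
have sr : s t != na / lam.
  by apply/eqP => E; move/eqP: Hne; apply; rewrite cE bE E.
rewrite cE bE LE.
apply: iff_trans _ (iff_sym (comp_line _ _ _ _ nn r0 sr)).
by rewrite subr_gt0 ltr_pdivlMr // mulrC.
Qed.
End Beta.
End Alpha.
End S.


Theorem lemmaD3 (R : realType) (C : set (R * R)) (alpha beta : R -> R * R)
  (s : R -> R) :
  diff_convex_curve C ->
  (* alpha : I -> C is a (regular) differentiable curve with differentiable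
     unit tangent and nonvanishing T', so that n and kappa are defined *)
  (forall t, t \in `[0, 1] -> C (alpha t)) ->
  (forall t, t \in `[0, 1] -> derivable alpha t 1) ->
  (forall t, t \in `[0, 1] -> derive1 alpha t != 0) ->
  (forall t, t \in `[0, 1] -> derivable (tangent alpha) t 1) ->
  (forall t, t \in `[0, 1] -> derive1 (tangent alpha) t != 0) ->
  counterclockwise C alpha ->
  (* beta(t) = alpha(t) + s(t) n(alpha(t)) is differentiable and avoids x_alpha(t) *)
  (forall t, t \in `[0, 1] -> beta t = alpha t + s t *: normal alpha t) ->
  (forall t, t \in `[0, 1] -> derivable beta t 1) ->
  (forall t, t \in `[0, 1] -> beta t != curv_center alpha t) ->
  forall t, t \in `[0, 1] ->
    (0 < det2 (derive1 beta t) (normal alpha t) <->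
     connected_component (normal_line alpha t `\ curv_center alpha t)
                         (alpha t) (beta t)).
Proof.
move=> _ HC Hd Hn0 HdT HT0 Hccw Hb Hbd Hne t tI.
exact: (@final_sec R C alpha HC Hd Hn0 HdT HT0 Hccw beta s Hb Hbd t tI (Hne t tI)).
Qed.
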